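(* Let $(\mathbb{X},\mathcal{A},\pi)$ be a probability space and let $T$ be a transition kernel on $\mathbb{X}$ (i.e. $T\colon \mathbb{X}\times\mathcal{A}\to[0,1]$ with $A\mapsto T(x,A)$ a probability measure for every $x\in\mathbb{X}$ and $x\mapsto T(x,A)$ measurable for every $A\in\mathcal{A}$) which preserves $\pi$, i.e. $\pi T=\pi$. Let $1\le p\le q$. Suppose that for all $f\in L^p(\pi)$, $$\|Tf\|_q\le \|f\|_p.$$ Then for every probability measure $\mu$ on $(\mathbb{X},\mathcal{A})$, $$\mathrm{H}(\mu T\,|\,\pi)\le \frac{p}{q}\,\mathrm{H}(\mu\,|\,\pi).$$
   Context: For a probability measure $\mu$ on $(\mathbb{X},\mathcal{A})$, $\mu T$ is the probability measure $(\mu T)(A)=\int_{\mathbb{X}} T(x,A)\,\mu(\mathrm{d}x)$. For a measurable function $f$, $Tf(x)=\int_{\mathbb{X}} f(y)\,T(x,\mathrm{d}y)$ (for signed $f$, by linearity whenever $Tf_+$ or $Tf_-$ is finite). $\|f\|_r=\left(\int |f|^r\,\mathrm{d}\pi\right)^{1/r}$. $\mathrm{H}(\mu\,|\,\pi)$ is the Kullback–Leibler divergence: $\mathrm{H}(\mu\,|\,\pi)=\int \log\left(\frac{\mathrm{d}\mu}{\mathrm{d}\pi}\right)\mathrm{d}\mu$ if $\mu\ll\pi$, and $+\infty$ otherwise. No reversibility or regularity of $T$ is assumed. *)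

(* Defs.v *)
From HB Require Import structures.
From mathcomp Require Import all_boot all_order all_algebra.
From mathcomp Require Import all_classical all_reals all_analysis.

Set Implicit Arguments.
Unset Strict Implicit.
Unset Printing Implicit Defensive.
Import Order.TTheory GRing.Theory Num.Theory.
Import numFieldNormedType.Exports.
Local Open Scope classical_set_scope.
Local Open Scope ring_scope.
Local Open Scope ereal_scope.
Local Open Scope charge_scope.

Section kpush.
Context d (X : measurableType d) (R : realType).
Variables (mu : probability X R) (T : R.-pker X ~> X).

Definition kpush_fun (A : set X) : \bar R := \int[mu]_x T x A.

Let kpush0 : kpush_fun set0 = 0.
Proof.
by rewrite /kpush_fun (eq_integral (cst 0)) ?integral0// => y _; rewrite measure0.
Qed.

Let kpush_ge0 U : 0 <= kpush_fun U. Proof. exact: integral_ge0. Qed.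

Let kpush_sigma_additive : semi_sigma_additive kpush_fun.
Proof.
move=> U mU tU mUU; rewrite [X in _ --> X](_ : _ =
  \int[mu]_y (\sum_(n <oo) T y (U n))); last first.
  apply: eq_integral => V _.
  by apply/esym/cvg_lim => //; exact/measure_semi_sigma_additive.
apply/cvg_closeP; split.
  by apply: is_cvg_nneseries => n _ _; exact: integral_ge0.
rewrite closeE// integral_nneseries// => n.
exact: (measurable_kernel T _ (mU n)).
Qed.

HB.instance Definition _ := isMeasure.Build _ _ R
  kpush_fun kpush0 kpush_ge0 kpush_sigma_additive.

Let kpush_setT : kpush_fun setT = 1.
Proof.
rewrite /kpush_fun (eq_integral (cst 1)); last by move=> x _; rewrite prob_kernel.
by rewrite integral_cst// mul1e; exact: probability_setT.
Qed.

HB.instance Definition _ :=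
  Measure_isProbability.Build _ _ R kpush_fun kpush_setT.

Definition kpush : probability X R := kpush_fun.

End kpush.

Definition kop d (X : measurableType d) (R : realType)
  (T : R.-pker X ~> X) (f : X -> R) : X -> \bar R :=
  fun x => \int[T x]_y (f y)%:E.

Definition relent d (X : measurableType d) (R : realType)
  (nu pi : probability X R) : \bar R :=
  if pselect (nu `<< pi) then
    \int[nu]_x lne (('d (charge_of_finite_measure nu) '/d pi) x)
  else +oo.

(* Main.v *)
Require Import Defs.
From HB Require Import structures.
From mathcomp Require Import all_boot all_order all_algebra.
From mathcomp Require Import all_classical all_reals all_analysis.
From mathcomp Require Import measurable_realfun.
From mathcomp Require Import lra ring.
Import Order.TTheory GRing.Theory Num.Theory.
Local Open Scope classical_set_scope.
Local Open Scope ring_scope.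

Section F_H1.
Local Open Scope ereal_scope.

Section pw. Context (R : realType).

Lemma pw_AB (a b : \bar R) : 0 <= a -> 0 <= b -> a + maxe (- (a - b)) 0 <= maxe (a - b) 0 + b.
Proof.
case: a => [a| |]; case: b => [b| |] //= a0 b0.
- rewrite -!EFinB.
  have [ab|ab] := leP a b.
  + rewrite (max_r (_ : (a - b)%:E <= 0)); last by rewrite lee_fin; lra.
    rewrite (max_l (_ : 0 <= (-(a - b))%:E)); last by rewrite lee_fin; lra.
    by rewrite -EFinD lee_fin; lra.
  + rewrite (max_l (_ : 0 <= (a - b)%:E)); last by rewrite lee_fin; lra.
    rewrite (max_r (_ : (-(a - b))%:E <= 0)); last by rewrite lee_fin; lra.
    by rewrite -!EFinD lee_fin; lra.
all: rewrite /Order.max /=.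
- by rewrite addeNy ltNy0 add0e leey.
- by rewrite ltNy0 adde0 addye// addye.
- by rewrite addeNy ltNy0 add0e leey.
Qed.
Lemma ng_AB (a b : \bar R) : 0 <= a -> 0 <= b -> maxe (- (a - b)) 0 <= b.
Proof.
move=> a0 b0; rewrite ge_max b0 andbT.
case: a a0 => [a| |]; case: b b0 => [b| |] //= b0 a0.
- by move: a0 b0; rewrite !lee_fin => a0 b0; lra.
- by rewrite leNye.
Qed.
End pw.

Section gen.
Context d (T : measurableType d) (R : realType).
Implicit Types (mu : {measure set T -> \bar R}) (f g : T -> \bar R).

Lemma le_int_ae mu f g : measurable_fun [set: T] f -> measurable_fun [set: T] g ->
  {ae mu, forall x, f x <= g x} -> \int[mu]_x f x <= \int[mu]_x g x.
Proof.
move=> mf mg fg; rewrite (integralE _ _ f) (integralE _ _ g).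
apply: leeB.
- apply: ae_ge0_le_integral => //.
  + exact: measurable_realfun.measurable_funepos.
  + exact: measurable_realfun.measurable_funepos.
  + apply: filterS fg => x fgx _; rewrite !funeposE.
    by rewrite ge_max !le_max fgx lexx !orbT.
- apply: ae_ge0_le_integral => //.
  + exact: measurable_realfun.measurable_funeneg.
  + exact: measurable_realfun.measurable_funeneg.
  + apply: filterS fg => x fgx _; rewrite !funenegE.
    by rewrite ge_max !le_max leeN2 fgx lexx !orbT.
Qed.

Lemma int_AB mu (A B : T -> \bar R) : (forall x, 0 <= A x) -> (forall x, 0 <= B x) ->
  measurable_fun [set: T] A -> measurable_fun [set: T] B ->
  \int[mu]_x A x - \int[mu]_x B x <= \int[mu]_x (A x - B x).
Proof.
move=> A0 B0 mA mB.
set C := fun x => A x - B x.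
have mC : measurable_fun [set: T] C by exact: emeasurable_funB.
have mCp := measurable_realfun.measurable_funepos mC.
have mCn := measurable_realfun.measurable_funeneg mC.
rewrite (integralE _ _ C).
have i1 : \int[mu]_x A x + \int[mu]_x C^\- x <= \int[mu]_x C^\+ x + \int[mu]_x B x.
  rewrite -!ge0_integralD //; apply: ge0_le_integral => //.
  - by move=> x _; rewrite adde_ge0.
  - exact: emeasurable_funD.
  - exact: emeasurable_funD.
  - by move=> x _; rewrite funeposE funenegE; exact: pw_AB.
have i2 : \int[mu]_x C^\- x <= \int[mu]_x B x.
  apply: ge0_le_integral => //.
  by move=> x _; rewrite funenegE; exact: ng_AB.
have e0 : 0 <= \int[mu]_x C^\- x by apply: integral_ge0.
have b0 : 0 <= \int[mu]_x B x by apply: integral_ge0.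
move: i1 i2 e0 b0.
case: (\int[mu]_x B x) => [b| |] i1 i2 e0 b0.
- have ef : \int[mu]_x C^\- x \is a fin_num.
    by rewrite ge0_fin_numE// (le_lt_trans i2) ?ltry.
  by rewrite leeBlDr// addeAC leeBrDr.
- by rewrite addeNy leNye.
- by move: b0; rewrite leNgt ltNy0.
Qed.

End gen.

End F_H1.

Section F_s2.
Local Open Scope ereal_scope.
Section S. Context {R : realType}.
Lemma ln_tangent (u c : R) : (0 < u)%R -> (0 < c)%R -> (ln u <= ln c + u / c - 1)%R.
Proof.
move=> u0 c0.
have h : (-1 < u / c - 1)%R by have := divr_gt0 u0 c0; lra.
have := le_ln1Dx h; rewrite addrC subrK lnM ?posrE ?invr_gt0// lnV ?posrE//.
lra.
Qed.

Lemma measurable_lne : measurable_fun [set: \bar R] (@lne R).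
Proof.
rewrite (_ : @lne R = fun x : \bar R => if x <= 0 then -oo else
   if x == +oo then +oo else (ln (fine x))%:E); last first.
  apply/funext => -[x| |] //=.
  by rewrite leNye.
apply: measurable_fun_ifT => //.
  exact: (@measurable_fun_lee _ _ _ _ id (cst 0)).
apply: measurable_fun_ifT => //.
  exact: (@measurable_fun_eqe _ _ _ _ id (cst +oo)).
by apply/measurable_EFinP; apply: measurableT_comp.
Qed.
End S.

End F_s2.

Section F_s5.
Local Open Scope ereal_scope.
Section S5. Context {R : realType}.
Lemma neg_lne_mul (r : R) : maxe (- lne r%:E) 0 * r%:E <= 1.
Proof.
have [r0|r0] := leP r 0%R.
  rewrite le0_lneNy ?lee_fin// /= (max_l le0y).
  have [->|rn] := eqVneq r 0%R; first by rewrite mule0 lee01.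
  have rlt : (r < 0)%R by rewrite lt_neqAle rn r0.
  by rewrite mulyr ltr0_sg// mulN1e leNye.
rewrite lne_EFin// -EFinN.
have [r1|r1] := leP 1%R r.
  by rewrite (max_r (_ : (- ln r)%:E <= 0)) ?mul0e ?lee01// lee_fin oppr_le0 ln_ge0.
rewrite max_l; last by rewrite lee_fin oppr_ge0 ln_le0// ltW.
rewrite -EFinM lee_fin.
have h := @ln_tangent R 1 r ltr01 r0.
rewrite ln1 in h.
have tr : (r^-1 * r = 1)%R by rewrite mulVf// gt_eqF.
set t := (r^-1)%R in h tr.
nra.
Qed.
End S5.

End F_s5.

Section F_s6.
Local Open Scope ereal_scope.
Section S6. Context {R : realType}.
Lemma s3_pw (p q s : R) (cx : \bar R) : (0 < p)%R -> (0 < q)%R -> (0 < s)%R -> 0 <= cx ->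
  p%:E * lne cx <= (p / q)%:E * ((ln s)%:E + (cx `^ q * ((s `^ (-1))%R)%:E - 1)).
Proof.
move=> p0 q0 s0; case: cx => [t| |] //= c0.
- have [t0|t0] := leP t 0%R.
    by rewrite gt0_muleNy ?lte_fin// leNye.
  rewrite powR_inv1; last exact: ltW.
  have -> : (p / q)%:E * ((ln s)%:E + ((t `^ q)%:E * (s^-1)%:E + (-1)%:E)) =
    (p / q * (ln s + (t `^ q * s^-1 - 1)))%:E by rewrite !EFinM !EFinD !EFinM.
  rewrite -EFinM lee_fin.
  have h := @ln_tangent R (t `^ q) s (ltac:(by apply: powR_gt0)) s0.
  rewrite ln_powR in h.
  have -> : (p * ln t = p / q * (q * ln t))%R by field; rewrite gt_eqF.
  apply: ler_wpM2l; first by rewrite ltW// divr_gt0.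
  lra.
- rewrite gt_eqF// mulyr gtr0_sg ?powR_gt0// mul1e addye// addey//.
  by rewrite !gt0_muley ?lte_fin ?divr_gt0.
Qed.
End S6.

End F_s6.

Section F_s3.
Local Open Scope ereal_scope.
Section J. Context d (T : measurableType d) (R : realType).

Lemma jensen_ln (P : {measure set T -> \bar R}) (P1 : P [set: T] = 1) (u : T -> R) (r : R) : (0 < r)%R ->
  (forall y, 0 <= u y)%R -> measurable_fun [set: T] u ->
  \int[P]_y lne (((u y) `^ r)%R%:E) <= r%:E * lne (\int[P]_y (u y)%:E).
Proof.
move=> r0 u0 mu.
have mlhs : measurable_fun [set: T] (fun y => lne (((u y) `^ r)%R%:E)).
  have mg : measurable_fun [set: T] (fun y => ((u y) `^ r)%R%:E).
    by apply/measurable_EFinP; exact: (measurableT_comp (measurable_powR r) mu).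
  exact: (measurableT_comp (@measurable_lne R) mg).
have c0 : 0 <= \int[P]_y (u y)%:E by apply: integral_ge0 => y _; rewrite lee_fin.
move: c0; case cE: (\int[P]_y (u y)%:E) => [c| |] c0 //; last first.
  by rewrite /= gt0_muley ?leey// lte_fin.
have intu : P.-integrable [set: T] (EFin \o u).
  apply/integrableP; split; first exact/measurable_EFinP.
  under eq_integral => y _ do rewrite gee0_abs ?lee_fin//.
  by rewrite cE ltry.
move: c0; rewrite lee_fin le_eqVlt => /orP[/eqP c0|c0].
-
  rewrite -c0 /= lexx /= gt0_muleNy ?lte_fin//.
  have ae0 : ae_eq P [set: T] (EFin \o u) (cst 0).
    apply/ae_eq_integral_abs => //; first exact/measurable_EFinP.
    under eq_integral => y _ do rewrite gee0_abs ?lee_fin//.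
    by rewrite cE -c0.
  apply: (@le_trans _ _ (\int[P]_y (cst -oo y))).
    apply: le_int_ae => //.
    apply: filterS ae0 => y /(_ I) /= [uy].
    by rewrite uy powR0 ?gt_eqF// lexx.
  by rewrite integral_cst//= P1 mule1.
- rewrite lne_EFin//.
  pose g y := (r * (ln c - 1) + r / c * u y)%R.
  have mg : measurable_fun [set: T] g.
    apply: measurable_funD => //; apply: measurable_funM => //.
  apply: (@le_trans _ _ (\int[P]_y (g y)%:E)).
    apply: le_int_ae => //; first exact/measurable_EFinP.
    apply: aeW => y.
    have := u0 y; rewrite le_eqVlt => /orP[/eqP uy0|uy0].
      by rewrite -uy0 powR0 ?gt_eqF// le0_lneNy ?leNye.
    rewrite lne_EFin ?powR_gt0// lee_fin ln_powR /g.
    have h := @ln_tangent _ (u y) c uy0 c0.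
    have E : (r * (ln c + u y / c - 1) = r * (ln c - 1) + r / c * u y)%R by ring.
    by rewrite -E; apply: ler_wpM2l => //; exact: ltW.
  under eq_integral => y _ do rewrite /g EFinD [X in _ + X]EFinM.
  rewrite integralD//; cycle 1.
    apply/integrableP; split => //.
    by rewrite integral_cst//= P1 mule1 ltry.
    exact: integrableZl.
  rewrite integral_cst//= P1 mule1 integralZl// cE -EFinM -EFinD lee_fin.
  have E : (r * (ln c - 1) + r / c * c = r * ln c)%R by field; rewrite gt_eqF.
  by rewrite E.
Qed.
End J.

End F_s3.

Section F_K.
Local Open Scope ereal_scope.

Section K.
Context d (X : measurableType d) (R : realType).
Variables (mu : probability X R) (T : R.-pker X ~> X).

Lemma measurable_kint (f : X -> \bar R) : (forall y, 0 <= f y) ->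
  measurable_fun [set: X] f -> measurable_fun [set: X] (fun x => \int[T x]_y f y).
Proof.
move=> f0 mf; apply: measurable_fun_integral_kernel => //.
by move=> U mU; exact: (measurable_kernel T U mU).
Qed.

Let kpush_indic E (mE : measurable E) :
  \int[kpush mu T]_z (\1_E z)%:E = \int[mu]_y (\int[T y]_z (\1_E z)%:E).
Proof.
rewrite integral_indic// setIT.
transitivity (\int[mu]_x T x E); first by [].
by apply: eq_integral => y _; rewrite integral_indic// setIT.
Qed.

Import HBNNSimple.

Let kpush_nnsfun (f : {nnsfun X >-> R}) :
  \int[kpush mu T]_z (f z)%:E = \int[mu]_y (\int[T y]_z (f z)%:E).
Proof.
under [in LHS]eq_integral do rewrite fimfunE -fsumEFin//.
rewrite ge0_integral_fsum//; last 2 first.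
  - by move=> r; exact/measurable_EFinP/measurableT_comp.
  - by move=> r z _; rewrite EFinM nnfun_muleindic_ge0.
under [in RHS]eq_integral.
  move=> y _.
  under eq_integral.
    by move=> z _; rewrite fimfunE -fsumEFin//; over.
  rewrite /= ge0_integral_fsum//; last 2 first.
    - by move=> r; exact/measurable_EFinP/measurableT_comp.
    - by move=> r z _; rewrite EFinM nnfun_muleindic_ge0.
  under eq_fsbigr.
    move=> r _.
    rewrite (integralZl_indic _ (fun r => f @^-1` [set r]))//; last first.
      by move=> r0; rewrite preimage_nnfun0.
    rewrite integral_indic// setIT.
    over.
  over.
rewrite /= ge0_integral_fsum//; last 2 first.
  - move=> r; apply: measurable_funeM.
    exact: (measurable_kernel T (f @^-1` [set r]) _).
  - move=> n y _.
    have := mulemu_ge0 (fun n => f @^-1` [set n]).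
    by apply; exact: preimage_nnfun0.
apply: eq_fsbigr => r _.
rewrite (integralZl_indic _ (fun r => f @^-1` [set r]))//; last first.
  exact: preimage_nnfun0.
rewrite /= kpush_indic//.
have [r0|r0] := leP 0%R r.
  rewrite ge0_integralZl//.
    by congr (_ * _); apply: eq_integral => y _; rewrite integral_indic// setIT.
  exact: (measurable_kernel T (f @^-1` [set r]) _).
rewrite integral0_eq ?mule0.
  by rewrite integral0_eq// => y _; rewrite preimage_nnfun0// measure0 mule0.
by move=> y _; rewrite integral0_eq// => z _; rewrite preimage_nnfun0// indic0.
Qed.

Lemma kpush_integral (f : X -> \bar R) : (forall z, 0 <= f z) ->
  measurable_fun [set: X] f ->
  \int[kpush mu T]_z f z = \int[mu]_y (\int[T y]_z f z).
Proof.
move=> f0 mf.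
pose f_ := nnsfun_approx measurableT mf.
transitivity (\int[kpush mu T]_z (lim ((f_ n z)%:E @[n --> \oo]))).
  by apply/eq_integral => z _; apply/esym/cvg_lim => //=; exact: cvg_nnsfun_approx.
rewrite monotone_convergence//; last 3 first.
  by move=> n; exact/measurable_EFinP.
  by move=> n z _; rewrite lee_fin.
  by move=> z _ a b ab; rewrite lee_fin; exact/lefP/nd_nnsfun_approx.
rewrite (_ : (fun _ => _) =
    (fun n => \int[mu]_y (\int[T y]_z (f_ n z)%:E)))//; last first.
  by apply/funext => n; rewrite kpush_nnsfun.
transitivity (\int[mu]_y lim ((\int[T y]_z (f_ n z)%:E) @[n --> \oo])).
  rewrite -monotone_convergence//; last 3 first.
  - move=> n; apply: measurable_kint.
    + by move=> z; rewrite lee_fin.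
    + exact/measurable_EFinP.
  - by move=> n y _; apply: integral_ge0 => // z _; rewrite lee_fin.
  - move=> y _ a b ab; apply: ge0_le_integral => //.
    + by move=> z _; rewrite lee_fin.
    + exact/measurable_EFinP.
    + exact/measurable_EFinP.
    + by move=> z _; rewrite lee_fin; exact/lefP/nd_nnsfun_approx.
apply: eq_integral => y _; rewrite -monotone_convergence//; last 3 first.
  - by move=> n; exact/measurable_EFinP.
  - by move=> n z _; rewrite lee_fin.
  - by move=> z _ a b ab; rewrite lee_fin; exact/lefP/nd_nnsfun_approx.
by apply: eq_integral => z _; apply/cvg_lim => //; exact: cvg_nnsfun_approx.
Qed.

Lemma kpush_le (f : X -> \bar R) : measurable_fun [set: X] f ->
  \int[kpush mu T]_z f z <= \int[mu]_y (\int[T y]_z f z).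
Proof.
move=> mf; rewrite integralE.
have mp := measurable_realfun.measurable_funepos mf.
have mn := measurable_realfun.measurable_funeneg mf.
rewrite (kpush_integral (f^\+))// ?(kpush_integral (f^\-))//.
under [X in _ <= X]eq_integral => y _ do rewrite integralE.
apply: int_AB.
- by move=> y; apply: integral_ge0.
- by move=> y; apply: integral_ge0.
- exact: measurable_kint.
- exact: measurable_kint.
Qed.

End K.

End F_K.

Section F_RN.
Local Open Scope ereal_scope.

Section RN.
Local Open Scope charge_scope.
Context d (X : measurableType d) (R : realType) (nu pi : probability X R).
Hypothesis nupi : nu `<< pi.

Local Notation k := ('d (charge_of_finite_measure nu) '/d pi).

Lemma rn_fin x : k x \is a fin_num.
Proof. exact: Radon_Nikodym_fin_num. Qed.

Lemma rn_meas : measurable_fun [set: X] k.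
Proof. by []. Qed.

Lemma rn_ae_ge0 : {ae pi, forall x, 0 <= k x}.
Proof.
have := ae_eq_Radon_Nikodym_SigmaFinite nupi (@measurableT _ X).
apply: filterS => x /(_ I) <-.
exact: Radon_Nikodym_SigmaFinite.f_ge0.
Qed.

Lemma rn_change (f : X -> \bar R) : (forall x, 0 <= f x) ->
  measurable_fun [set: X] f ->
  \int[pi]_x (f x * k x) = \int[nu]_x f x.
Proof.
move=> f0 mf.
rewrite -(Radon_Nikodym_SigmaFinite.change_of_variables nupi f0 measurableT mf).
apply: ae_eq_integral => //.
- by apply: emeasurable_funM.
- apply: emeasurable_funM => //.
  apply: measurable_int.
  exact: Radon_Nikodym_SigmaFinite.f_integrable.
- apply: ae_eqe_mul2l; apply: ae_eq_sym.
  exact: ae_eq_Radon_Nikodym_SigmaFinite.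
Qed.

Lemma rn_int A : measurable A -> nu A = \int[pi]_(x in A) k x.
Proof. move=> mA; exact: (@Radon_Nikodym_integral _ _ _ (charge_of_finite_measure nu) pi A nupi mA). Qed.

End RN.

End F_RN.

Section F_D.
Local Open Scope ereal_scope.

Lemma kpush_dom d (X : measurableType d) (R : realType) (mu pi : probability X R)
  (T : R.-pker X ~> X) :
  (forall A : set X, measurable A -> kpush pi T A = pi A) ->
  mu `<< pi -> kpush mu T `<< pi.
Proof.
move=> HT mupi N piN A mA AN.
have piA0 : pi A = 0 by exact: piN.
have h0 : \int[pi]_x `|T x A| = 0.
  rewrite -piA0 -HT//.
  by apply: eq_integral => x _; rewrite gee0_abs.
have mTA : measurable_fun [set: X] (fun x => T x A) by exact: measurable_kernel.
move/(ae_eq_integral_abs _ measurableT mTA): h0 => h0.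
have h1 := null_dominates_ae_eq measurableT mupi h0.
transitivity (\int[mu]_x T x A); first by [].
rewrite (ae_eq_integral (cst 0) _ measurableT mTA _ h1)//.
by rewrite integral0.
Qed.

End F_D.

Theorem theorem2p1 (R : realType) (d : measure_display) (X : measurableType d)
    (pi : probability X R) (T : R.-pker X ~> X) (p q : R) :
  (forall A : set X, measurable A -> kpush pi T A = pi A) ->
  1 <= p -> p <= q ->
  (forall f : X -> R, measurable_fun [set: X] f ->
     ('N[pi]_p%:E [EFin \o f] < +oo)%E ->
     ('N[pi]_q%:E [kop T f] <= 'N[pi]_p%:E [EFin \o f])%E) ->
  forall mu : probability X R,
    (relent (kpush mu T) pi <= (p / q)%:E * relent mu pi)%E.
Proof.
move=> HT p1 pq Hyp mu.
have p0 : (0 < p)%R by exact: lt_le_trans ltr01 p1.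
have q0 : (0 < q)%R by exact: lt_le_trans p0 pq.
have pq0 : (0 < p / q)%R by exact: divr_gt0.
rewrite /relent.
case: (pselect (mu `<< pi)) => [mupi|nmupi]; last first.
  by rewrite gt0_muley ?lte_fin// leey.
have nupi := @kpush_dom _ _ _ mu pi T HT mupi.
have -> : is_left (pselect (kpush mu T `<< pi)) = true.
  by case: (pselect (kpush mu T `<< pi)).
have -> : is_left (left mupi) = true by [].
set nu := kpush mu T.
set k := Radon_Nikodym (charge_of_finite_measure nu) pi.
set h := Radon_Nikodym (charge_of_finite_measure mu) pi.
Open Scope ereal_scope.
pose a := \int[mu]_x lne (h x).
have [ay|ay] := eqVneq a +oo.
  by rewrite -/a ay gt0_muley ?lte_fin// leey.
have hfin x : h x \is a fin_num := @rn_fin _ _ _ mu pi mupi x.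
have kfin x : k x \is a fin_num := @rn_fin _ _ _ nu pi nupi x.
have mh : measurable_fun [set: X] h := @rn_meas _ _ _ mu pi mupi.
have mk : measurable_fun [set: X] k := @rn_meas _ _ _ nu pi nupi.
have mlh : measurable_fun [set: X] (fun x => lne (h x)).
  exact: (measurableT_comp (@measurable_lne R) mh).
pose lh := fun x => lne (h x).
have neg1 : \int[mu]_x lh^\- x <= 1.
  rewrite -(@rn_change _ _ _ mu pi mupi); last 2 first.
    by move=> x; exact: funeneg_ge0.
    exact: measurable_realfun.measurable_funeneg.
  apply: (@le_trans _ _ (\int[pi]_x (cst 1 x))); last first.
    by rewrite integral_cst//= probability_setT mule1.
  apply: le_int_ae => //.
    apply: emeasurable_funM => //; exact: measurable_realfun.measurable_funeneg.
  apply: aeW => x /=.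
  rewrite funenegE /lh.
  by move: (neg_lne_mul (fine (h x))); rewrite fineK.
have negfin : \int[mu]_x lh^\- x \is a fin_num.
  by rewrite ge0_fin_numE ?(le_lt_trans neg1) ?ltry//; apply: integral_ge0 => x _; exact: funeneg_ge0.
have posfin : \int[mu]_x lh^\+ x < +oo.
  move: ay; rewrite /a integralE -/lh.
  move: negfin; case: (\int[mu]_x lh^\- x) => [N||] //= _.
  by case: (\int[mu]_x lh^\+ x) => [P||] //= _; rewrite ltry.
have ilh : mu.-integrable [set: X] lh.
  apply/integrableP; split => //.
  rewrite (_ : (fun x => `|lh x|) = (fun x => lh^\+ x + lh^\- x)); last first.
    by apply/funext => x; rewrite -/((abse \o lh) x) fune_abse.
  rewrite ge0_integralD //; do ?[by move=> x _; exact: funepos_ge0 | by move=> x _; exact: funeneg_ge0 | exact: measurable_realfun.measurable_funepos | exact: measurable_realfun.measurable_funeneg].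
  by rewrite lte_add_pinfty// -(fineK negfin) ltry.
have afin : a \is a fin_num := integrable_fin_num measurableT ilh.
pose kr x := Num.max (fine (k x)) 0%R.
pose F x := ((kr x) `^ p^-1)%R.
have mkr : measurable_fun [set: X] kr.
  apply: measurable_maxr => //.
  exact: (measurableT_comp (fine_measurable measurableT) mk).
have mF : measurable_fun [set: X] F := measurableT_comp (measurable_powR _) mkr.
have F0 x : (0 <= F x)%R := powR_ge0 _ _.
have kr0 x : (0 <= kr x)%R by rewrite /kr le_max lexx orbT.
have FpE x : ((F x) `^ p = kr x)%R.
  by rewrite /F -powRrM mulVf ?gt_eqF// powRr1.
have lnek x : lne (k x) = lne (((F x) `^ p)%R%:E).
  rewrite FpE /kr -{1}(fineK (kfin x)).
  have [hk|hk] := leP (fine (k x)) 0%R.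
    by rewrite !le0_lneNy ?lee_fin.
  by rewrite ?max_l// ltW.
have kint : \int[pi]_x (kr x)%:E = 1.
  transitivity (\int[pi]_x k x).
    apply: ae_eq_integral => //; first exact/measurable_EFinP.
    apply: filterS (@rn_ae_ge0 _ _ _ nu pi nupi) => x k0 _.
    by rewrite /kr max_l ?fineK// -lee_fin fineK.
  by rewrite -(@rn_int _ _ _ nu pi nupi _ measurableT) probability_setT.
have NF : 'N[pi]_p%:E [EFin \o F] = 1.
  rewrite unlock /=.
  under eq_integral => x _ do rewrite ger0_norm// FpE.
  by rewrite kint poweR1r.
have HF := Hyp F mF (ltac:(by rewrite NF ltry)).
rewrite NF in HF.
pose c x := kop T F x.
have c0 x : 0 <= c x by apply: integral_ge0 => y _; rewrite lee_fin.
have mc : measurable_fun [set: X] c.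
  by apply: measurable_kint; [move=> y; rewrite lee_fin | exact/measurable_EFinP].
pose G x := c x `^ q.
have Gint : \int[pi]_x G x <= 1.
  have NE := @poweR_Lnorm _ X R pi (kop T F) q (lt0r_neq0 q0).
  have -> : \int[pi]_x G x = \int[pi]_x `|kop T F x| `^ q.
    by apply: eq_integral => x _; rewrite gee0_abs.
  rewrite -NE -(poweR1r q).
  apply: gt0_ler_poweR => //; first exact: ltW.
    by rewrite in_itv /= Lnorm_ge0 leey.
    by rewrite in_itv /= lee01 leey.
pose hr x := Num.max (fine (h x)) 0%R.
have mhr : measurable_fun [set: X] hr.
  apply: measurable_maxr => //.
  exact: (measurableT_comp (fine_measurable measurableT) mh).
have hr0 x : (0 <= hr x)%R by rewrite /hr le_max lexx orbT.
pose f2 x := G x * ((hr x) `^ (-1))%R%:E.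
have mG : measurable_fun [set: X] G := measurableT_comp (measurable_poweR q) mc.
have mf2 : measurable_fun [set: X] f2.
  apply: emeasurable_funM => //; apply/measurable_EFinP.
  exact: (measurableT_comp (measurable_powR _) mhr).
have f20 x : 0 <= f2 x by apply: mule_ge0; [exact: poweR_ge0|rewrite lee_fin powR_ge0].
have f2int : \int[mu]_x f2 x <= 1.
  rewrite -(@rn_change _ _ _ mu pi mupi) //.
  apply: le_trans Gint; apply: le_int_ae => //.
    exact: emeasurable_funM.
  apply: aeW => x /=.
  rewrite -[X in _ * X](fineK (hfin x)) /f2 /hr.
  have [hx|hx] := leP (fine (h x)) 0%R.
    by rewrite powR0 ?oppr_eq0 ?oner_eq0// mule0 mul0e poweR_ge0.
  rewrite powR_inv1; last exact: ltW.
  by rewrite -muleA -EFinM mulVf ?gt_eqF// mule1.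
have if2 : mu.-integrable [set: X] f2.
  apply/integrableP; split => //.
  under eq_integral => x _ do rewrite gee0_abs//.
  by rewrite (le_lt_trans f2int) ?ltry.
have hpos : {ae mu, forall x, 0 < h x}.
  pose B := [set x | h x <= 0].
  have mB : measurable B.
    by have := emeasurable_fun_infty_c measurableT mh 0; rewrite setTI.
  exists B; split => //; last first.
    by move=> x /= /negP; rewrite -leNgt.
  apply/eqP; rewrite eq_le measure_ge0 andbT.
  rewrite (@rn_int _ _ _ mu pi mupi _ mB) integralE.
  rewrite (@integral0_eq _ _ _ _ _ (h^\+)); last first.
    by move=> x Bx; rewrite funeposE max_r.
  by rewrite sub0e leeNl oppe0; apply: integral_ge0 => x _; exact: funeneg_ge0.
have mlF : measurable_fun [set: X] (fun y => lne (((F y) `^ p)%R%:E)).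
  have mg : measurable_fun [set: X] (fun y => ((F y) `^ p)%R%:E).
    by apply/measurable_EFinP; exact: (measurableT_comp (measurable_powR p) mF).
  exact: (measurableT_comp (@measurable_lne R) mg).
rewrite (eq_integral (fun y => lne (((F y) `^ p)%R%:E))); last by move=> y _; exact: lnek.
apply: (le_trans (@kpush_le _ _ _ mu T _ mlF)).
have mTl : measurable_fun [set: X]
    (fun x => \int[T x]_y lne (((F y) `^ p)%R%:E)).
  rewrite (_ : (fun x => \int[T x]_y lne (((F y) `^ p)%R%:E)) = (fun x =>
     \int[T x]_y (fun y => lne (((F y) `^ p)%R%:E))^\+ y -
     \int[T x]_y (fun y => lne (((F y) `^ p)%R%:E))^\- y)); last first.
    by apply/funext => x; exact: integralE.
  apply: emeasurable_funB; apply: measurable_kint.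
  - by move=> y; exact: funepos_ge0.
  - exact: measurable_realfun.measurable_funepos.
  - by move=> y; exact: funeneg_ge0.
  - exact: measurable_realfun.measurable_funeneg.
have mlc : measurable_fun [set: X] (fun x => lne (c x)).
  exact: (measurableT_comp (@measurable_lne R) mc).
apply: (@le_trans _ _ (\int[mu]_x (p%:E * lne (c x)))).
  apply: le_int_ae => //.
    exact: emeasurable_funM.
  apply: aeW => x.
  rewrite /c /kop.
  exact: (@jensen_ln _ _ _ (T x) (ltac:(exact: prob_kernel)) F p p0 F0 mF).
have i1 : mu.-integrable [set: X] (fun x => f2 x - cst 1 x).
  apply: integrableB => //.
  apply/integrableP; split => //.
  by rewrite integral_cst//= probability_setT mule1 normr1 ltry.
have i2 : mu.-integrable [set: X] (fun x => lh x + (f2 x - cst 1 x)).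
  exact: integrableD.
apply: (@le_trans _ _ (\int[mu]_x ((p / q)%:E * (lh x + (f2 x - cst 1 x))))).
  apply: le_int_ae => //.
    exact: emeasurable_funM.
    apply: emeasurable_funM => //; apply: emeasurable_funD => //.
    exact: emeasurable_funB.
  apply: filterS hpos => x hx.
  have sx : (0 < fine (h x))%R by rewrite -lte_fin fineK.
  rewrite /lh /f2 /G /hr max_l; last exact: ltW.
  rewrite -[h x](fineK (hfin x)) /= (lt_geF sx).
  exact: s3_pw.
have icst : mu.-integrable [set: X] (cst 1).
  apply/integrableP; split => //.
  by rewrite integral_cst//= probability_setT mule1 normr1 ltry.
rewrite (integralZl measurableT i2) (integralD measurableT ilh i1).
rewrite (integralB measurableT if2 icst).
rewrite integral_cst//= probability_setT mule1 -/a.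
apply: lee_wpmul2l; first by rewrite lee_fin ltW.
rewrite -[X in _ <= X]adde0 leeD2l//.
by rewrite leeBlDr// add0e.
Qed.
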